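(* Let $(X,\perp,Y,T)$ be an implicative frame. Then the operation $\blacktriangleright:\mathcal{G}(X)\times\mathcal{G}(Y)\to\mathcal{G}(Y)$ distributes over arbitrary joins of Galois sets in each argument place: for any families $A_i\in\mathcal{G}(X)$ ($i\in I$) and $B_j\in\mathcal{G}(Y)$ ($j\in J$), $\left(\bigvee_{i\in I}A_i\right)\blacktriangleright\left(\bigvee_{j\in J}B_j\right)=\bigvee_{i\in I,j\in J}(A_i\blacktriangleright B_j)$.
   Context: A sorted frame (polarity) is a triple $(X,\perp,Y)$ with $X,Y$ nonempty sets and ${\perp}\subseteq X\times Y$. For $U\subseteq X$ let $U'=\{y\in Y:\forall x\in U\ x\perp y\}$, and for $V\subseteq Y$ let ${}'V=\{x\in X:\forall y\in V\ x\perp y\}$. $A\subseteq X$ is stable if $A={}'(A')$; $B\subseteq Y$ is co-stable if $B=({}'B)'$. $\mathcal{G}(X)$, $\mathcal{G}(Y)$ are the complete lattices of stable, resp. co-stable, sets under inclusion (meets are intersections; the join of a family is the closure of its union, where the closure of $W\subseteq X$ is ${}'(W')$ and of $W\subseteq Y$ is $W''=({}'W)'$). Preorders: for $x,z\in X$, $x\le z$ iff $\{x\}'\subseteq\{z\}'$; for $y,v\in Y$, $y\le v$ iff ${}'\{y\}\subseteq{}'\{v\}$; the frame is separated if both are partial orders. $\Gamma u$ is the set of elements (of the same sort) above $u$. For $T\subseteq Y\times X\times Y$ (write $yTxv$), its Galois dual $T'\subseteq X\times X\times Y$ is given by $uT'xv$ iff $\forall y\in Y\,(yTxv\Rightarrow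 u\perp y)$. An implicative frame is $(X,\perp,Y,T)$ with $T\subseteq Y\times X\times Y$ such that: (F0) for all $x\in X,y\in Y$: $x\perp y$ iff $uT'xy$ for all $u\in X$; (F1) the frame is separated; (F2) for all $x\in X,v\in Y$ the set $\{y\in Y: yTxv\}$ equals $\Gamma w$ for some $w\in Y$; (F3) for each $y\in Y$, if $yTxv$, $x_1\le x$ and $v_1\le v$ then $yTx_1v_1$; (F4) for all $u,x\in X$ and $v\in Y$, the set $\{x_1\in X:uT'x_1v\}$ is stable and the set $\{v_1\in Y:uT'xv_1\}$ is co-stable. For $A\in\mathcal{G}(X)$, $B\in\mathcal{G}(Y)$ define $A\blacktriangleright B=\left(\{y\in Y:\exists x\in A\,\exists v\in B\ yTxv\}\right)''$. *)

(* Defs.v *)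
Definition set_eq {A : Type} (P Q : A -> Prop) : Prop := forall a, P a <-> Q a.

Section Polarity.
Context {X Y : Type} (perp : X -> Y -> Prop).

Definition rperp (U : X -> Prop) : Y -> Prop := fun y => forall x, U x -> perp x y.
Definition lperp (V : Y -> Prop) : X -> Prop := fun x => forall y, V y -> perp x y.

Definition stable (A : X -> Prop) : Prop := set_eq A (lperp (rperp A)).
Definition costable (B : Y -> Prop) : Prop := set_eq B (rperp (lperp B)).

Definition leX (x z : X) : Prop := forall y, perp x y -> perp z y.
Definition leY (y v : Y) : Prop := forall x, perp x y -> perp x v.

Definition separated : Prop :=
  (forall x z, leX x z -> leX z x -> x = z) /\ (forall y v, leY y v -> leY v y -> y = v).

Definition GammaY (w : Y) : Y -> Prop := fun y => leY w y.

Definition Tdual (T : Y -> X -> Y -> Prop) (u x : X) (v : Y) : Prop :=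
  forall y, T y x v -> perp u y.

(* joins in G(X) and G(Y): closures of unions *)
Definition joinX {I : Type} (F : I -> X -> Prop) : X -> Prop :=
  lperp (rperp (fun x => exists i, F i x)).
Definition joinY {I : Type} (F : I -> Y -> Prop) : Y -> Prop :=
  rperp (lperp (fun y => exists i, F i y)).

Definition imp (T : Y -> X -> Y -> Prop) (A : X -> Prop) (B : Y -> Prop) : Y -> Prop :=
  rperp (lperp (fun y => exists x v, A x /\ B v /\ T y x v)).

Definition implicative_frame (T : Y -> X -> Y -> Prop) : Prop :=
  inhabited X /\ inhabited Y /\
  (forall x y, perp x y <-> forall u, Tdual T u x y) /\
  separated /\
  (forall x v, exists w, set_eq (fun y => T y x v) (GammaY w)) /\
  (forall y x v x1 v1, T y x v -> leX x1 x -> leY v1 v -> T y x1 v1) /\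
  (forall u x v, stable (fun x1 => Tdual T u x1 v) /\ costable (fun v1 => Tdual T u x v1)).

End Polarity.

(* Main.v *)
Require Import Defs.

Theorem lemma3p4 (X Y : Type) (perp : X -> Y -> Prop) (T : Y -> X -> Y -> Prop)
  (HF : implicative_frame perp T)
  (I J : Type) (A : I -> X -> Prop) (B : J -> Y -> Prop)
  (HA : forall i, stable perp (A i)) (HB : forall j, costable perp (B j)) :
  set_eq (imp perp T (joinX perp A) (joinY perp B))
         (joinY perp (fun p : I * J => imp perp T (A (fst p)) (B (snd p)))).
Proof.
  destruct HF as [_ [_ [_ [_ [_ [_ F4]]]]]].
  intro y; split.
  - intros Hy u Hu. apply Hy.
    intros y0 [x [v [Hx [Hv HT]]]].
    assert (Hd : forall x' v', (exists i, A i x') -> (exists j, B j v') -> Tdual perp T u x' v').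
    { intros x' v' [i Hi] [j Hj] y' HT'.
      apply Hu. exists (i, j). simpl.
      intros w Hw. apply Hw. exists x', v'. auto. }
    assert (Hd2 : forall v', (exists j, B j v') -> Tdual perp T u x v').
    { intros v' Hv'. destruct (F4 u x v') as [Hs _].
      apply (proj2 (Hs x)). intros y1 Hy1. apply Hx.
      intros x1 Hx1. apply (proj1 (Hs x1)). apply Hd; auto. exact Hy1. }
    destruct (F4 u x v) as [_ Hc].
    apply (proj2 (Hc v)). 2: exact HT.
    intros x1 Hx1. apply Hv. intros v1 Hv1. apply (proj1 (Hc v1)).
    apply Hd2; auto. exact Hx1.
  - intros Hy u Hu. apply Hy.
    intros z [[i j] Hz]. simpl in Hz. apply Hz.
    intros y' [x' [v' [Hx' [Hv' HT']]]]. apply Hu.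
    exists x', v'. split; [|split; [|exact HT']].
    + intros w Hw. apply Hw. exists i; exact Hx'.
    + intros w Hw. apply Hw. exists j; exact Hv'.
Qed.
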